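(* For every closed subset $F\subset\mathrm{GL}_n(\mathbb{C})$, the set $\mathrm{sLog}(F)$ is closed in $\mathbb{R}^n/\mathcal{S}_n$.
   Context: $\mathcal{S}_n$ acts on $\mathbb{R}^n$ by permuting coordinates; $\mathbb{R}^n/\mathcal{S}_n$ carries the metric $d(x,y) = \min_{\sigma\in\mathcal{S}_n}|\sigma\cdot x - y|$. $\mathrm{sLog}:\mathrm{GL}_n(\mathbb{C})\to\mathbb{R}^n/\mathcal{S}_n$ sends $A$ to $(\ln\lambda_1,\dots,\ln\lambda_n)$ where $\lambda_1,\dots,\lambda_n$ are the singular values of $A$ (square roots of the eigenvalues of $AA^*$). Closedness of $F$ is with respect to the usual topology of $\mathrm{GL}_n(\mathbb{C})$. *)

(* Defs.v *)
From HB Require Import structures.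
From mathcomp Require Import all_boot all_order all_algebra all_fingroup complex.
From mathcomp Require Import all_classical all_reals all_analysis.
Unset Printing Implicit Defensive.
Import Order.TTheory GRing.Theory Num.Theory.
Import numFieldNormedType.Exports.
Local Open Scope ring_scope.
Local Open Scope classical_set_scope.

(* The complex numbers over the real field R, viewed as a numFieldType, so
   that MathComp-Analysis equips it (and its matrices) with the usual
   (Euclidean / product) topology. *)
Definition cplx (R : realType) : numClosedFieldType := R[i].

Definition GL (R : realType) (n : nat) : set 'M[cplx R]_n :=
  [set A | A \in unitmx].

Definition closed_in_GL (R : realType) (n : nat) (F : set 'M[cplx R]_n) :=
  F `<=` GL R n /\ exists G : set 'M[cplx R]_n, closed G /\ F = G `&` GL R n.

Definition adjoint (R : realType) (n : nat) (A : 'M[cplx R]_n) : 'M[cplx R]_n :=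
  (map_mx Num.conj A)^T.

Definition singular_values (R : realType) (n : nat) (A : 'M[cplx R]_n)
    (lam : 'rV[R]_n) : Prop :=
  (forall i, 0 < lam 0 i) /\
  char_poly (A *m @adjoint R n A) =
    \prod_(i < n) ('X - ((((lam 0 i) ^+ 2 : R)%:C)%C : cplx R)%:P).

Definition sLog_rep (R : realType) (n : nat) (A : 'M[cplx R]_n) (x : 'rV[R]_n) :=
  exists lam : 'rV[R]_n, @singular_values R n A lam /\ forall i, x 0 i = ln (lam 0 i).

(* Representatives (in R^n) of the points of sLog(F) in R^n/S_n. This set is
   S_n-invariant, so it is exactly the preimage of sLog(F) under the quotient
   map R^n -> R^n/S_n. *)
Definition sLog_set (R : realType) (n : nat) (F : set 'M[cplx R]_n) : set 'rV[R]_n :=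
  [set x | exists2 A, F A & @sLog_rep R n A x].

Definition eucl (R : realType) (n : nat) (x : 'rV[R]_n) : R :=
  Num.sqrt (\sum_(i < n) (x 0 i) ^+ 2).

Definition perm_act (R : realType) (n : nat) (s : 'S_n) (x : 'rV[R]_n) : 'rV[R]_n :=
  col_perm s x.

(* Quotient metric d([x],[y]) = min_{s in S_n} |s.x - y| on R^n/S_n,
   computed on representatives. *)
Definition qdist (R : realType) (n : nat) (x y : 'rV[R]_n) : R :=
  \big[Order.min/@eucl R n (x - y)]_(s : 'S_n) @eucl R n (@perm_act R n s x - y).

(* A subset of R^n/S_n, given by its (S_n-invariant) set S of representatives,
   is closed for the metric d: every point at d-distance 0 from it belongs
   to it. *)
Definition qclosed (R : realType) (n : nat) (S : set 'rV[R]_n) : Prop :=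
  forall y : 'rV[R]_n,
    (forall e : R, 0 < e -> exists2 x, S x & @qdist R n x y < e) -> S y.

(* Main.v *)
Require Import Defs.
From HB Require Import structures.
From mathcomp Require Import all_boot all_order all_algebra all_fingroup complex.
From mathcomp Require Import all_classical all_reals all_analysis.
From mathcomp Require Import lra.
Import Order.TTheory GRing.Theory Num.Theory.
Import numFieldNormedType.Exports.
Local Open Scope ring_scope.
Local Open Scope classical_set_scope.

Section CvgBig.
Variables (K : numFieldType) (T : Type) (F : set_system T) (FF : Filter F).

Lemma cvg_sum_seq (I : eqType) (s : seq I) (f : I -> T -> K) (l : I -> K) :
  (forall i, f i @ F --> l i) ->
  (fun t => \sum_(i <- s) f i t) @ F --> \sum_(i <- s) l i.
Proof.
move=> H; elim: s => [|a s IH].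
  rewrite big_nil.
  have -> : (fun t => \sum_(i <- [::]) f i t) = (fun=> 0) by apply/funext => t; rewrite big_nil.
  exact: cvg_cst.
rewrite big_cons.
have -> : (fun t => \sum_(i <- a :: s) f i t) = (f a + (fun t => \sum_(i <- s) f i t))%R.
  by apply/funext => t; rewrite big_cons.
exact: cvgD.
Qed.

Lemma cvg_prod_seq (I : eqType) (s : seq I) (f : I -> T -> K) (l : I -> K) :
  (forall i, f i @ F --> l i) ->
  (fun t => \prod_(i <- s) f i t) @ F --> \prod_(i <- s) l i.
Proof.
move=> H; elim: s => [|a s IH].
  rewrite big_nil.
  have -> : (fun t => \prod_(i <- [::]) f i t) = (fun=> 1) by apply/funext => t; rewrite big_nil.
  exact: cvg_cst.
rewrite big_cons.
have -> : (fun t => \prod_(i <- a :: s) f i t) = (f a \* (fun t => \prod_(i <- s) f i t))%R.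
  by apply/funext => t; rewrite big_cons.
exact: cvgM.
Qed.

Lemma cvg_sum_fin (I : finType) (f : I -> T -> K) (l : I -> K) :
  (forall i, f i @ F --> l i) ->
  (fun t => \sum_i f i t) @ F --> \sum_i l i.
Proof. exact: cvg_sum_seq. Qed.

Lemma cvg_prod_fin (I : finType) (f : I -> T -> K) (l : I -> K) :
  (forall i, f i @ F --> l i) ->
  (fun t => \prod_i f i t) @ F --> \prod_i l i.
Proof. exact: cvg_prod_seq. Qed.

Lemma cvg_det n (M : T -> 'M[K]_n) (L : 'M[K]_n) :
  (forall i j, (fun t => M t i j) @ F --> L i j) ->
  (fun t => \det (M t)) @ F --> \det L.
Proof.
move=> H; rewrite /determinant.
apply: (@cvg_sum_fin _ (fun (s : 'S_n) t => (-1) ^+ s * \prod_i M t i (s i)) (fun (s : 'S_n) => (-1) ^+ s * \prod_i L i (s i))).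
move=> s; apply: cvgM; first exact: cvg_cst.
apply: (@cvg_prod_fin _ (fun i t => M t i (s i)) (fun i => L i (s i))) => i; exact: H.
Qed.

End CvgBig.

Section Cplx.
Variable R : realType.

Lemma cvg_conj (T : Type) (F : set_system T) (FF : Filter F) (f : T -> cplx R) l :
  f @ F --> l -> (fun t => Num.conj (f t)) @ F --> Num.conj l.
Proof.
move=> /cvgrPdist_lt H; apply/cvgrPdist_lt => e e0.
by apply: filterS (H e e0) => t; rewrite -rmorphB norm_conjC.
Qed.

Lemma normC_real (x : R) : `|(x%:C)%C : cplx R| = ((`|x|)%:C)%C.
Proof.
rewrite normc_def /=; congr (_%:C)%C.
by rewrite expr0n /= addr0 sqrtr_sqr.
Qed.

Lemma pos_cplx (e : cplx R) : 0 < e -> e = ((complex.Re e)%:C)%C /\ 0 < complex.Re e.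
Proof.
case: e => a b; rewrite ltcE /= => /andP[/eqP-> ->]; split => //.
Qed.

Lemma cvg_realC (T : Type) (F : set_system T) (FF : Filter F) (u : T -> R) (l : R) :
  u @ F --> l -> (fun t => ((u t)%:C)%C : cplx R) @ F --> ((l%:C)%C : cplx R).
Proof.
move=> /cvgrPdist_lt H; apply/cvgrPdist_lt => e /pos_cplx [-> e0].
apply: filterS (H _ e0) => t.
by rewrite -rmorphB normC_real ltcR.
Qed.

End Cplx.
Definition phi2 (R : realType) (v : 'rV[R]_2) : cplx R := (v ord0 ord0 +i* v ord0 ord_max)%C.

Lemma phi2_cont (R : realType) : continuous (@phi2 R).
Proof.
move=> v; apply/(@cvgrPdist_lt _ _ _ (nbhs v) _) => e /pos_cplx [-> e0].
set r := complex.Re e.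
have r2 : 0 < r / 2 by rewrite divr_gt0.
have /cvgrPdist_lt/(_ _ r2) H0 := @coord_continuous R 1 2 ord0 ord0 v.
have /cvgrPdist_lt/(_ _ r2) H1 := @coord_continuous R 1 2 ord0 ord_max v.
apply: filterS2 H0 H1 => w h0 h1.
rewrite /phi2 normc_def /= ltcR.
have e0' : 0 < r by [].
move: h0 h1; rewrite !ltr_norml => /andP[a1 a2] /andP[b1 b2].
rewrite -(ger0_norm (ltW e0')) -sqrtr_sqr ltr_sqrt ?exprn_gt0 //.
set a := v ord0 ord0 - w ord0 ord0 in a1 a2 *.
set b := v ord0 ord_max - w ord0 ord_max in b1 b2 *.
nra.
Qed.
Lemma mxvec_index_inj m n (i i' : 'I_m) (j j' : 'I_n) :
  mxvec_index i j = mxvec_index i' j' -> i = i' /\ j = j'.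
Proof.
by rewrite /mxvec_index => /cast_ord_inj/enum_rank_inj [-> ->].
Qed.

Lemma vec_mx_cont (T : topologicalType) m n : continuous (@vec_mx T m n).
Proof.
move=> v B [P hP sPB].
exists (fun (i : 'I_1) k => [set t | forall i' j', mxvec_index i' j' = k -> P i' j' t]).
  move=> i k; rewrite (ord1 i).
  case/mxvec_indexP: k => i0 j0.
  have := hP i0 j0; rewrite mxE => h.
  apply: filterS h => t Pt i' j' /mxvec_index_inj [-> ->] //.
move=> w Hw; apply: sPB => i j /=; rewrite mxE.
exact: Hw.
Qed.

Lemma mx_box_compact (T : ptopologicalType) m n (A : 'I_m -> 'I_n -> set T) :
  (forall i j, compact (A i j)) ->
  compact [set M : 'M[T]_(m, n) | forall i j, A i j (M i j)].
Proof.
move=> cA.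
pose B k := [set t : T | forall i j, mxvec_index i j = k -> A i j t].
have cB : forall k, compact (B k).
  move=> k; case/mxvec_indexP: k => i j.
  have -> : B (mxvec_index i j) = A i j.
    apply/seteqP; split => t.
    - by move=> h; exact: h _ _ erefl.
    - by move=> h i' j' /mxvec_index_inj [-> ->].
  exact: cA.
have := continuous_compact (continuous_subspaceT (@vec_mx_cont T m n)) (rV_compact cB).
congr compact; apply/seteqP; split => M.
- move=> [v Hv <-] i j; rewrite mxE; exact: Hv.
- move=> HM; exists (mxvec M); last exact: mxvecK.
  move=> k; case/mxvec_indexP: k => i j i' j' /mxvec_index_inj [<- <-].
  by rewrite mxvecE.
Qed.
Lemma cluster_lim {K : numFieldType} {T : topologicalType} (u : nat -> T) (A : T)
  (g : T -> K) (L : K) :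
  cluster (u @ \oo) A -> {for A, continuous g} -> (g \o u) @ \oo --> L -> g A = L.
Proof.
move=> hC gc gu; apply: norm_hausdorff => U V hU hV.
have hU' : nbhs A (g @^-1` U) by exact: gc.
have hV' : (u @ \oo) (g @^-1` V) by exact: gu.
have [M [MV MU]] := hC _ _ hV' hU'.
by exists (g M).
Qed.
Section Alg.
Variable R : realType.

Lemma qdist_lt n (x y : 'rV[R]_n) e :
  @qdist R n x y < e -> exists s : 'S_n, @eucl R n (@perm_act R n s x - y) < e.
Proof.
rewrite /qdist; elim/big_ind: _ => [h|a b ha hb|s _ h].
- by exists 1%g; rewrite /perm_act col_perm1.
- by rewrite gt_min => /orP[/ha|/hb].
- by exists s.
Qed.

Lemma eucl_coord n (v : 'rV[R]_n) i : `|v 0 i| <= @eucl R n v.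
Proof.
rewrite /eucl -sqrtr_sqr ler_sqrt; last by apply: sumr_ge0 => j _; exact: sqr_ge0.
rewrite (bigD1 i) //= lerDl; apply: sumr_ge0 => j _; exact: sqr_ge0.
Qed.

Lemma sv_perm n (A : 'M[cplx R]_n) lam (s : 'S_n) :
  @singular_values R n A lam -> @singular_values R n A (col_perm s lam).
Proof.
move=> [hp hc]; split.
  by move=> i; rewrite mxE; exact: hp.
rewrite hc (reindex_inj (@perm_inj _ s)) /=.
by apply: eq_bigr => i _; rewrite mxE.
Qed.

Lemma sv_trace n (A : 'M[cplx R]_n) lam : @singular_values R n A lam ->
  \sum_i \sum_j `|A i j| ^+ 2 = (((\sum_i lam 0 i ^+ 2)%:C)%C : cplx R).
Proof.
case: n A lam => [|n] A lam [_ hc]; first by rewrite !big_ord0.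
have ht := @char_poly_trace _ n.+1 (A *m @adjoint R n.+1 A) isT.
rewrite hc /= in ht.
set c := fun i : 'I_n.+1 => (((lam 0 i ^+ 2)%:C)%C : cplx R).
have e : \prod_i ('X - (c i)%:P) = \prod_(p <- map c (index_enum 'I_n.+1)) ('X - p%:P).
  by rewrite big_map.
rewrite e in ht.
have sz : size (map c (index_enum 'I_n.+1)) = n.+1.
  rewrite size_map; have := deprecated_filter_index_enum (@predT 'I_n.+1).
  by rewrite filter_predT => ->; rewrite -cardE card_ord.
have h0 := @coefPn_prod_XsubC _ (map c (index_enum 'I_n.+1)).
rewrite sz /= in h0; rewrite h0 // in ht; move/oppr_inj: ht; rewrite big_map => ht.
rewrite rmorph_sum /= -/c ht /mxtrace.
apply: eq_bigr => i _; rewrite mxE; apply: eq_bigr => j _; rewrite !mxE normCK.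
by [].
Qed.

End Alg.

Lemma horner_char (K : comNzRingType) n (M : 'M[K]_n) z :
  (char_poly M).[z] = \det (z%:M - M).
Proof.
rewrite /char_poly -horner_evalE -det_map_mx; congr (determinant _); apply/matrixP => i j.
rewrite !mxE /= horner_evalE.
by rewrite !hornerE hornerMn hornerX.
Qed.

Lemma poly_eq_horner (K : numFieldType) (p q : {poly K}) :
  (forall z, p.[z] = q.[z]) -> p = q.
Proof.
move=> h; apply/eqP; rewrite -subr_eq0; apply/negPn/negP => hn.
suff: (size [seq (i%:R : K) | i <- iota 0 (size (p - q)%R)] < size (p - q)%R)%N.
  by rewrite size_map size_iota ltnn.
apply: max_poly_roots hn _ _.
- by apply/allP => z _; rewrite /root !hornerE h subrr.
- rewrite map_inj_uniq ?iota_uniq // => a b /eqP; rewrite eqr_nat => /eqP //.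
Qed.

Definition cbox (R : realType) (c : R) : set (cplx R) :=
  [set @phi2 R v | v in [set v : 'rV[R]_2 | forall i, `[-c, c]%classic (v ord0 i)]].

Lemma cbox_compact (R : realType) (c : R) : compact (@cbox R c).
Proof.
apply: continuous_compact; first exact: continuous_subspaceT (@phi2_cont R).
exact: (@rV_compact R 2 (fun _ => `[-c, c]%classic) (fun _ => @segment_compact R (-c) c)).
Qed.

Lemma in_cbox (R : realType) (c : R) (z : cplx R) :
  `|complex.Re z| <= c -> `|complex.Im z| <= c -> @cbox R c z.
Proof.
move=> h1 h2; exists (\row_(i < 2) if i == ord0 then complex.Re z else complex.Im z).
  move=> i; rewrite mxE; case: ifP => _; rewrite /= in_itv /= -ler_norml //.
rewrite /phi2 !mxE /=; case: z {h1 h2} => a b //.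
Qed.

Theorem mainTheorem4 (R : realType) (n : nat) (F : set 'M[cplx R]_n) :
  @closed_in_GL R n F -> @qclosed R n (@sLog_set R n F).
Proof.
move=> [FGL [G [cG FE]]] y Hy.
have step : forall k : nat, exists AL : 'M[cplx R]_n * 'rV[R]_n,
  [/\ F AL.1, @singular_values R n AL.1 AL.2 &
      forall i, `|ln (AL.2 0 i) - y 0 i| < k.+1%:R^-1].
  move=> k; have e0 : 0 < (k.+1%:R^-1 : R) by rewrite invr_gt0 ltr0n.
  have [x [A FA [lam [sv hx]]] hq] := Hy _ e0.
  have [s hs] := @qdist_lt R _ _ _ _ hq.
  exists (A, col_perm s lam); split => //; first exact: (@sv_perm R).
  move=> i /=; apply: le_lt_trans hs.
  have := @eucl_coord R _ (@perm_act R n s x - y) i.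
  by rewrite /perm_act !mxE hx.
have [f hf] := choice step.
pose u k := (f k).1.
pose lam k := (f k).2.
have lam_pos k i : 0 < lam k 0 i.
  by have [_ [hp _] _] := hf k; exact: hp.
have lamE k i : lam k 0 i = expR (ln (lam k 0 i)) by rewrite lnK // posrE lam_pos.
have cvx i : (fun k => ln (lam k 0 i)) @ \oo --> y 0 i.
  apply/cvgrPdist_lt => e e0.
  apply: filterS (near_infty_natSinv_lt (PosNum e0)) => k /= hk.
  have [_ _ h] := hf k; rewrite distrC; exact: lt_trans (h i) hk.
have cvlam i : (fun k => lam k 0 i) @ \oo --> expR (y 0 i).
  have -> : (fun k => lam k 0 i) = expR \o (fun k => ln (lam k 0 i)).
    by apply/funext => k; rewrite /= -lamE.
  apply: cvg_comp (cvx i) _; exact: continuous_expR.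
pose Sy := \sum_i expR (y 0 i + 1) ^+ 2.
pose c := 1 + Sy.
have Sy0 : 0 <= Sy by apply: sumr_ge0 => i _; exact: sqr_ge0.
have hbound k i j : @cbox R c (u k i j).
  have [_ sv h] := hf k.
  have ht := @sv_trace R _ _ _ sv.
  have le1 : `|u k i j| ^+ 2 <= (((\sum_i0 lam k 0 i0 ^+ 2)%:C)%C : cplx R).
    rewrite -ht (bigD1 i) //= (bigD1 j) //= -addrA lerDl.
    apply: addr_ge0; first by apply: sumr_ge0 => j' _; exact: exprn_ge0.
    by apply: sumr_ge0 => i' _; apply: sumr_ge0 => j' _; exact: exprn_ge0.
  have le2 : \sum_i0 lam k 0 i0 ^+ 2 <= Sy.
    apply: ler_sum => i0 _.
    have hl : ln (lam k 0 i0) <= y 0 i0 + 1.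
      have := h i0; rewrite ltr_norml => /andP[_ H].
      have : (k.+1%:R^-1 : R) <= 1 by rewrite invf_le1 ?ler1n // ltr0n.
      have H2 : ln (lam k 0 i0) - y 0 i0 < k.+1%:R^-1 by exact: H.
      move=> H1; have H3 := lt_le_trans H2 H1.
      by rewrite -lerBlDl ltW.
    have : lam k 0 i0 <= expR (y 0 i0 + 1) by rewrite lamE ler_expR.
    have := lam_pos k i0; nra.
  rewrite -add_Re2_Im2 lecR in le1.
  have le3 := le_trans le1 le2.
  apply: in_cbox; rewrite ler_norml; apply/andP; split; rewrite /c; nra.
pose Bx := [set M : 'M[cplx R]_n | forall i j, @cbox R c (M i j)].
have cK : compact (Bx `&` G).
  have h1 := @mx_box_compact _ n n _ (fun i j => @cbox_compact R c).
  exact: compact_closedI h1 cG.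
have [A [[_ GA] clA]] : exists A, (Bx `&` G `&` cluster (u @ \oo)) A.
  apply: (cK (u @ \oo)); exists 0%N => // k _; split; first exact: hbound.
  by have [+ _ _] := hf k; rewrite FE => -[].
pose cc i := (((expR (y 0 i) ^+ 2)%:C)%C : cplx R).
have hz z : \det (z%:M - A *m @adjoint R n A) = \prod_i (z - cc i).
  apply: (@cluster_lim _ _ u A (fun M => \det (z%:M - M *m @adjoint R n M))) => //.
  - apply: (@cvg_det _ _ (nbhs A) _ n (fun M => z%:M - M *m @adjoint R n M)) => i j.
    have gen : forall M : 'M[cplx R]_n, (z%:M - M *m @adjoint R n M) i j =
        z%:M i j - \sum_k M i k * Num.conj (M j k).
      by move=> M; rewrite !mxE; congr (_ - _); apply: eq_bigr => k _; rewrite !mxE.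
    have -> : (fun M : 'M[cplx R]_n => (z%:M - M *m @adjoint R n M) i j) =
        (fun M => z%:M i j - \sum_k M i k * Num.conj (M j k)) by apply/funext => M; exact: gen.
    rewrite gen; apply: cvgB; first exact: cvg_cst.
    apply: (@cvg_sum_fin _ _ (nbhs A) _ _ (fun k M => M i k * Num.conj (M j k))
                           (fun k => A i k * Num.conj (A j k))) => k.
    apply: cvgM; first exact: coord_continuous.
    by apply: cvg_conj; exact: coord_continuous.
  - have -> : ((fun M => \det (z%:M - M *m @adjoint R n M)) \o u) =
        (fun k => \prod_i (z - (((lam k 0 i ^+ 2)%:C)%C))).
      apply/funext => k /=; have [_ [_ hc] _] := hf k.
      rewrite -horner_char hc horner_prod; apply: eq_bigr => i _.
      by rewrite hornerXsubC.
    apply: (@cvg_prod_fin _ _ \oo _ _ (fun i k => z - (((lam k 0 i ^+ 2)%:C)%C))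
                            (fun i => z - cc i)) => i.
    apply: (@cvgB _ _ _ \oo _ (fun=> z) (fun k => ((lam k 0 i ^+ 2)%:C)%C)); first exact: cvg_cst.
    apply: (@cvg_realC _ _ \oo _).
    have -> : (fun k => lam k 0 i ^+ 2) = (fun k => lam k 0 i) \* (fun k => lam k 0 i).
      by apply/funext => k; rewrite /= expr2.
    by rewrite expr2; apply: cvgM; exact: cvlam.
have hpoly : char_poly (A *m @adjoint R n A) = \prod_i ('X - (cc i)%:P).
  apply: poly_eq_horner => z; rewrite horner_char hz horner_prod.
  by apply: eq_bigr => i _; rewrite hornerXsubC.
have unitA : A \in unitmx.
  have := char_poly_det (A *m @adjoint R n A).
  rewrite -horner_coef0 hpoly horner_prod => hd.
  rewrite unitmxE unitfE; apply/eqP => dA0.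
  move: hd; rewrite det_mulmx dA0 mul0r mulr0 => /eqP /prodf_eq0 [i _].
  rewrite hornerXsubC sub0r oppr_eq0 /cc fmorph_eq0 sqrf_eq0.
  by rewrite gt_eqF // expR_gt0.
have FA : F A by rewrite FE; split.
exists A => //; exists (\row_i expR (y 0 i)); split; first split.
- by move=> i; rewrite mxE expR_gt0.
- by rewrite hpoly; apply: eq_bigr => i _; rewrite mxE.
- by move=> i; rewrite mxE expRK.
Qed.
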